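(* Let $p\ge1$, $\nu>p$, $\epsilon>0$, $\gamma>0$, let $B$ be a $p\times p$ symmetric positive definite matrix and $S$ a $p\times p$ symmetric positive semidefinite matrix. Let $M=\{X\in\mathbb{S}^p: X-\epsilon I\succeq0\}$ and let $N$ be as in the context. Define, for $X\in\mathbb{S}^p_{++}$ and $Y\in\mathbb{R}^{p\times p}$, $$P_\gamma(X,Y)=-(\nu-p)\log(\det X)+\mathrm{tr}((B^{-1}+S)X)+\frac{\gamma}{2}\|X-Y\|_F^2.$$ Then the problem $\min\{P_\gamma(X,Y):(X,Y)\in M\times N\}$ has a unique minimizer.
   Context: $\mathbb{S}^p$ ($\mathbb{S}^p_{++}$) is the set of $p\times p$ symmetric (symmetric positive definite) matrices; $\|\cdot\|_F$ is the Frobenius norm. Each node $i\in\{1,\dots,p\}$ has a type $s_i$ and a neighbor set $\mathcal{N}_i\subseteq\{1,\dots,p\}\setminus\{i\}$, and $N=\{X\in\mathbb{R}^{p\times p}:\ X_{ii}=X_{jj}\text{ whenever } s_i=s_j;\ X_{ij}=X_{kl}\text{ whenever } j\in\mathcal{N}_i,\ l\in\mathcal{N}_k,\ s_i=s_k,\ s_j=s_l;\ X_{ij}=0\text{ whenever } i\neq j \text{ and } j\notin\mathcal{N}_i\}$. *)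

(* Defs.v *)
From HB Require Import structures.
From mathcomp Require Import all_boot all_order all_algebra.
From mathcomp Require Import all_classical all_reals all_analysis.
Set Implicit Arguments. Unset Strict Implicit. Unset Printing Implicit Defensive.
Import Order.TTheory GRing.Theory Num.Theory.
Local Open Scope ring_scope.

Section Defs.
Variable R : realType.

Definition symmx p (A : 'M[R]_p) : Prop := A^T = A.

Definition psdmx p (A : 'M[R]_p) : Prop :=
  symmx A /\ forall v : 'cV[R]_p, 0 <= (v^T *m A *m v) 0 0.

Definition pdmx p (A : 'M[R]_p) : Prop :=
  symmx A /\ forall v : 'cV[R]_p, v != 0 -> 0 < (v^T *m A *m v) 0 0.

Definition frob p (A : 'M[R]_p) : R :=
  Num.sqrt (\sum_(i < p) \sum_(j < p) A i j ^+ 2).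

Definition setM p (eps : R) (X : 'M[R]_p) : Prop :=
  symmx X /\ psdmx (X - eps%:M).

(* N, given node types s and neighbour sets Nb *)
Definition setN p (T : eqType) (s : 'I_p -> T) (Nb : 'I_p -> {set 'I_p})
  (X : 'M[R]_p) : Prop :=
  [/\ (forall i j, s i = s j -> X i i = X j j),
      (forall i j k l, j \in Nb i -> l \in Nb k -> s i = s k -> s j = s l ->
          X i j = X k l)
    & (forall i j, i != j -> j \notin Nb i -> X i j = 0)].

Definition Pgamma p (nu gamma : R) (B S X Y : 'M[R]_p) : R :=
  - (nu - p%:R) * ln (\det X) + \tr ((invmx B + S) *m X)
  + gamma / 2 * frob (X - Y) ^+ 2.

End Defs.

(* Main.v *)
Require Import Defs.
From HB Require Import structures.
From mathcomp Require Import all_boot all_order all_algebra.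
From mathcomp Require Import fingroup perm.
From mathcomp Require Import all_classical all_reals all_analysis.
From mathcomp Require Import ring lra.
Import Order.TTheory GRing.Theory Num.Theory.
Import numFieldTopology.Exports numFieldNormedType.Exports.
Local Open Scope ring_scope.
Set Implicit Arguments. Unset Strict Implicit. Unset Printing Implicit Defensive.

Section Basics.
Variable R : realType.

Definition bil n (A : 'M[R]_n) (x y : 'rV[R]_n) : R := (x *m A *m y^T) 0 0.
Definition qf n (A : 'M[R]_n) (x : 'rV[R]_n) : R := bil A x x.
Definition nrm2 n (x : 'rV[R]_n) : R := (x *m x^T) 0 0.

Lemma bilE n (A : 'M[R]_n) x y :
  bil A x y = \sum_i \sum_j x 0 i * A i j * y 0 j.
Proof.
rewrite /bil mxE; under eq_bigr => j _ do rewrite !mxE big_distrl /=.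
by rewrite exchange_big.
Qed.

Lemma nrm2E n (x : 'rV[R]_n) : nrm2 x = \sum_i x 0 i ^+ 2.
Proof. by rewrite /nrm2 mxE; apply: eq_bigr => i _; rewrite mxE expr2. Qed.

Lemma nrm2_ge0 n (x : 'rV[R]_n) : 0 <= nrm2 x.
Proof. by rewrite nrm2E sumr_ge0 // => i _; rewrite sqr_ge0. Qed.

Lemma nrm2_eq0 n (x : 'rV[R]_n) : nrm2 x = 0 -> x = 0.
Proof.
rewrite nrm2E => h; apply/rowP => i; rewrite mxE.
have := psumr_eq0P (fun i _ => sqr_ge0 (x 0 i)) h (i:=i) isT.
by move/eqP; rewrite sqrf_eq0 => /eqP.
Qed.

Lemma bilDl n (A : 'M[R]_n) x y z : bil A (x + y) z = bil A x z + bil A y z.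
Proof. by rewrite /bil !mulmxDl mxE. Qed.
Lemma bilDr n (A : 'M[R]_n) x y z : bil A z (x + y) = bil A z x + bil A z y.
Proof. by rewrite /bil linearD /= mulmxDr mxE. Qed.
Lemma bilZl n (A : 'M[R]_n) a x z : bil A (a *: x) z = a * bil A x z.
Proof. by rewrite /bil -!scalemxAl mxE. Qed.
Lemma bilZr n (A : 'M[R]_n) a x z : bil A z (a *: x) = a * bil A z x.
Proof. by rewrite /bil linearZ /= -scalemxAr mxE. Qed.
Lemma bilNr n (A : 'M[R]_n) x z : bil A z (- x) = - bil A z x.
Proof. by rewrite -scaleN1r bilZr mulN1r. Qed.
Lemma bilNl n (A : 'M[R]_n) x z : bil A (- x) z = - bil A x z.
Proof. by rewrite -scaleN1r bilZl mulN1r. Qed.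
Lemma bilC n (A : 'M[R]_n) x y : A^T = A -> bil A x y = bil A y x.
Proof.
move=> hA; rewrite /bil.
have h : (x *m A *m y^T)^T = y *m A *m x^T.
  by rewrite !trmx_mul trmxK hA mulmxA.
by rewrite -h [in RHS]mxE.
Qed.
Lemma bilMDl n (A B : 'M[R]_n) x y : bil (A + B) x y = bil A x y + bil B x y.
Proof. by rewrite /bil mulmxDr mulmxDl mxE. Qed.
Lemma bilMZl n (A : 'M[R]_n) a x y : bil (a *: A) x y = a * bil A x y.
Proof. by rewrite /bil -scalemxAr -scalemxAl mxE. Qed.
Lemma bilMN n (A : 'M[R]_n) x y : bil (- A) x y = - bil A x y.
Proof. by rewrite -scaleN1r bilMZl mulN1r. Qed.
Lemma bil1 n (x y : 'rV[R]_n) : bil 1%:M x y = (x *m y^T) 0 0.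
Proof. by rewrite /bil mulmx1. Qed.
Lemma qf1 n (x : 'rV[R]_n) : qf 1%:M x = nrm2 x.
Proof. by rewrite /qf bil1. Qed.

Lemma qfD n (A : 'M[R]_n) x y : A^T = A ->
  qf A (x + y) = qf A x + 2 * bil A x y + qf A y.
Proof.
move=> hA; rewrite /qf bilDl !bilDr (bilC y x hA); ring.
Qed.

Lemma qfZ n (A : 'M[R]_n) a x : qf A (a *: x) = a ^+ 2 * qf A x.
Proof. by rewrite /qf bilZl bilZr mulrA expr2. Qed.

Lemma psd_null n (A : 'M[R]_n) v : A^T = A -> (forall w, 0 <= qf A w) ->
  qf A v = 0 -> v *m A = 0.
Proof.
move=> hA hpsd hv; set u := v *m A.
have buv : bil A v u = nrm2 u by rewrite /bil /nrm2.
set a := nrm2 u; set b := qf A u.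
have a0 : 0 <= a by exact: nrm2_ge0.
have b0 : 0 <= b by exact: hpsd.
set t := a / (b + 1).
have ht : t * (b + 1) = a by rewrite /t mulfVK // gt_eqF // ltr_wpDl.
have := hpsd (v + (- t) *: u).
rewrite qfD // hv qfZ bilZr buv -/b => h.
have : t ^+ 2 * (b + 2) <= 0.
  have -> : t ^+ 2 * (b + 2) = - (0 + 2 * (- t * a) + (- t) ^+ 2 * b).
    rewrite -ht; ring.
  by rewrite oppr_le0.
move=> h2.
have t0 : t = 0.
  have h3 : t ^+ 2 <= 0 by nra.
  by apply/eqP; rewrite -sqrf_eq0 eq_le sqr_ge0 h3.
by apply: nrm2_eq0; rewrite -/a -ht t0 mul0r.
Qed.

Lemma cont_sum (T : topologicalType) (I : finType) (f : I -> T -> R) :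
  (forall i, continuous (f i)) -> continuous (fun x => \sum_i f i x).
Proof.
move=> hf x; rewrite /index_enum; elim: (Finite.enum I) => [|i s IH].
  under eq_fun do rewrite big_nil; exact: cst_continuous.
under eq_fun do rewrite big_cons.
exact: (@continuousD _ R^o _ (f i) _ x (hf i x) IH).
Qed.

Lemma cont_prod (T : topologicalType) (I : finType) (f : I -> T -> R) :
  (forall i, continuous (f i)) -> continuous (fun x => \prod_i f i x).
Proof.
move=> hf x; rewrite /index_enum; elim: (Finite.enum I) => [|i s IH].
  under eq_fun do rewrite big_nil; exact: cst_continuous.
under eq_fun do rewrite big_cons.
exact: (@continuousM _ _ (f i) _ x (hf i x) IH).
Qed.

Lemma cont_mul (T : topologicalType) (f g : T -> R) :
  continuous f -> continuous g -> continuous (fun x => f x * g x).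
Proof. by move=> hf hg x; exact: (@continuousM _ _ f g x (hf x) (hg x)). Qed.

Lemma cont_add (T : topologicalType) (f g : T -> R) :
  continuous f -> continuous g -> continuous (fun x => f x + g x).
Proof. by move=> hf hg x; exact: (@continuousD _ R^o _ f g x (hf x) (hg x)). Qed.

Lemma cont_cst (T : topologicalType) (c : R) : continuous (fun _ : T => c).
Proof. exact: cst_continuous. Qed.

Lemma cont_coord m n (i : 'I_m) (j : 'I_n) :
  continuous (fun M : 'M[R]_(m, n) => M i j).
Proof. exact: coord_continuous. Qed.

Lemma cont_qf n (A : 'M[R]_n) : continuous (fun v : 'rV[R]_n => qf A v).
Proof.
have -> : (fun v : 'rV[R]_n => qf A v) =
   (fun v => \sum_i \sum_j v 0 i * A i j * v 0 j).
  by apply: funext => v; rewrite /qf bilE.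
apply: cont_sum => i; apply: cont_sum => j.
apply: cont_mul; last exact: cont_coord.
apply: cont_mul; [exact: cont_coord| exact: cont_cst].
Qed.

End Basics.

Section Spectral.
Variable R : realType.
Local Open Scope classical_set_scope.
Local Open Scope ring_scope.

Lemma nrm2_cont n : continuous (fun v : 'rV[R]_n => nrm2 v).
Proof.
have -> : (fun v : 'rV[R]_n => nrm2 v) = (fun v => qf 1%:M v).
  by apply: funext => v; rewrite qf1.
exact: cont_qf.
Qed.

Lemma nrm2Z n a (x : 'rV[R]_n) : nrm2 (a *: x) = a ^+ 2 * nrm2 x.
Proof. by rewrite -!qf1 qfZ. Qed.

Lemma nrm2_e0 n : nrm2 ('e_0 : 'rV[R]_n.+1) = 1.
Proof.
by rewrite /nrm2 trmx_delta mul_delta_mx mxE !eqxx.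
Qed.

Lemma qf0 n (A : 'M[R]_n) : qf A 0 = 0.
Proof. by rewrite -(scale0r (0 : 'rV_n)) qfZ expr0n mul0r. Qed.

Lemma eigvec n (A : 'M[R]_n.+1) : A^T = A ->
  exists v lam, nrm2 v = 1 /\ v *m A = lam *: v.
Proof.
move=> hA.
set S := [set v : 'rV[R]_n.+1 | nrm2 v = 1].
have S0 : S !=set0 by exists 'e_0; exact: nrm2_e0.
have cS : compact S.
  apply: bounded_closed_compact.
    exists 1; split; first exact: num_real.
    move=> M M1 v Sv.
    change (mx_norm v <= M); rewrite mx_normrE.
    apply: bigmax_le; first by apply: le_trans (ltW M1).
    move=> [i j] _ /=; rewrite (ord1 i).
    have h : v 0 j ^+ 2 <= 1.
      rewrite -Sv nrm2E (bigD1 j) //= lerDl sumr_ge0 // => k _.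
      exact: sqr_ge0.
    have h2 : `|v 0 j| <= 1.
      by rewrite ler_norml; apply/andP; split; nra.
    by apply: le_trans h2 (ltW M1).
  have -> : S = (fun v => nrm2 v) @^-1` [set x | x = 1] by [].
  by move: (nrm2_cont (n:=n.+1)) => /continuous_closedP; apply; exact: closed_eq.
have [v Sv vmax] := EVT_max_rV S0 cS (continuous_subspaceT (@cont_qf R _ A)).
have v1 : nrm2 v = 1 by move: Sv; rewrite inE.
set lam := qf A v.
have hle : forall w, qf A w <= lam * nrm2 w.
  move=> w; have [->|w0] := eqVneq w 0.
    by rewrite qf0 -(scale0r (0 : 'rV_n.+1)) nrm2Z expr0n !mul0r mulr0.
  set a := nrm2 w.
  have a0 : 0 < a.
    rewrite lt_def nrm2_ge0 andbT; apply: contra w0 => /eqP h.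
    by apply/eqP; exact: nrm2_eq0.
  set w' := (Num.sqrt a)^-1 *: w.
  have hw' : w' \in S.
    rewrite inE /S /= /w' nrm2Z -/a exprVn sqr_sqrtr ?(ltW a0) //.
    by rewrite mulVf // gt_eqF.
  have := vmax _ hw'; rewrite /w' qfZ exprVn sqr_sqrtr ?(ltW a0) // -/lam.
  move=> h; have e : qf A w = a * (a^-1 * qf A w).
    by rewrite mulrA mulfV ?gt_eqF // mul1r.
  by rewrite e [lam * a]mulrC ler_pM2l.
set Bm := lam%:M - A.
have hB : Bm^T = Bm by rewrite /Bm linearB /= tr_scalar_mx hA.
have qB : forall w, qf Bm w = lam * nrm2 w - qf A w.
  move=> w; rewrite /qf /Bm bilMDl bilMN -scalemx1 bilMZl bil1.
  by rewrite /nrm2.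
have := @psd_null _ _ Bm v hB.
rewrite qB v1 mulr1 subrr => /(_ _ erefl).
have : forall w, 0 <= qf Bm w by move=> w; rewrite qB subr_ge0.
move=> H /(_ H) h; exists v, lam; split => //.
by move: h; rewrite /Bm mulmxBr mul_mx_scalar => /eqP; rewrite subr_eq0 => /eqP.
Qed.

End Spectral.

Section Spectral2.
Variable R : realType.

Lemma householder n (v : 'rV[R]_n.+1) : nrm2 v = 1 ->
  exists H : 'M[R]_n.+1, [/\ H^T = H, H *m H = 1%:M & row 0 H = v].
Proof.
move=> v1; have [->|hv] := eqVneq v 'e_0.
  by exists 1%:M; rewrite tr_scalar_mx mulmx1 rowE mulmx1.
set u := 'e_0 - v.
set a := nrm2 u.
have a0 : a != 0.
  apply: contra hv => /eqP h; have := nrm2_eq0 h; rewrite /u => /eqP.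
  by rewrite subr_eq0 eq_sym.
set c := 2 / a.
set X := u^T *m u.
have XX : X *m X = a *: X.
  rewrite /X mulmxA -[u^T *m u *m u^T]mulmxA (mx11_scalar (u *m u^T)).
  by rewrite mul_mx_scalar -scalemxAl.
have hc : c * (c * a) = c + c.
  by rewrite /c; field.
exists (1%:M - c *: X); split.
- by rewrite linearB /= linearZ /= tr_scalar_mx /X trmx_mul trmxK.
- rewrite mulmxBl mul1mx mulmxBr mulmx1 -scalemxAl -scalemxAr XX !scalerA.
  by rewrite -mulrA hc scalerDl opprB addrK subrK.
- rewrite rowE mulmxBr mulmx1 -scalemxAr /X mulmxA.
  rewrite (mx11_scalar ('e_0 *m u^T)) mul_scalar_mx scalerA.
  have -> : c * (('e_0 : 'rV[R]_n.+1) *m u^T) 0 0 = 1.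
    set b := bil 1%:M 'e_0 v.
    have e1 : (('e_0 : 'rV[R]_n.+1) *m u^T) 0 0 = 1 - b.
      by rewrite -bil1 /u bilDr bilNr bil1 -/(nrm2 _) nrm2_e0.
    have e2 : a = 2 - 2 * b.
      rewrite /a -qf1 /u qfD ?tr_scalar_mx // qf1 nrm2_e0 bilNr -/b.
      rewrite -[- v]scaleN1r qfZ qf1 v1; ring.
    rewrite e1 /c; move: a0; rewrite e2 => a0; field.
    by move: a0; apply: contra => /eqP h; apply/eqP; rewrite -h; ring.
  by rewrite scale1r /u opprB addrC subrK.
Qed.

Lemma spectral n (A : 'M[R]_n) : A^T = A ->
  exists (Q : 'M[R]_n) (d : 'rV[R]_n), Q *m Q^T = 1%:M /\ A = Q^T *m diag_mx d *m Q.
Proof.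
elim: n A => [|n IH] A hA.
  exists 1%:M, 0; split; first by rewrite tr_scalar_mx mulmx1.
  by apply/matrixP => [[]].
have [v [lam [v1 vA]]] := eigvec hA.
have [H [HT HH H0]] := householder v1.
have [A1 A1def] : exists A1, A1 = H *m A *m H by eexists.
have hA1 : A1^T = A1 by rewrite A1def !trmx_mul HT hA mulmxA.
have r0 : row 0 A1 = lam *: ('e_0 : 'rV[R]_n.+1).
  rewrite A1def !row_mul H0 vA -scalemxAl -H0 -row_mul HH rowE mulmx1.
  done.
pose A1' : 'M[R]_(1 + n) := A1.
set A' := drsubmx A1'.
have hA' : A'^T = A' by rewrite /A' trmx_drsub hA1.
have [Q' [d' [hQ' hA'Q]]] := IH A' hA'.
have hul : ulsubmx A1' = lam%:M.
  apply/matrixP => i j; rewrite (ord1 i) (ord1 j) !mxE /=.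
  have := congr1 (fun M : 'rV[R]_n.+1 => M 0 0) r0; rewrite !mxE /= mulr1 mulr1n => <-.
  by rewrite /A1'; congr (A1 _ _); apply: val_inj.
have hur : ursubmx A1' = 0.
  apply/matrixP => i j; rewrite (ord1 i) !mxE /=.
  have := congr1 (fun M : 'rV[R]_(1 + n) => M 0 (rshift 1 j)) r0; rewrite !mxE /=.
  have -> : (lshift n (0 : 'I_1)) = 0 :> 'I_(1 + n) by apply: val_inj.
  by move=> ->; rewrite mulr0.
have hdl : dlsubmx A1' = 0.
  by rewrite -[A1']hA1 -trmx_ursub hur trmx0.
have eA1 : A1' = block_mx lam%:M 0 0 A'.
  by rewrite -[LHS]submxK hul hur hdl.
pose Bq : 'M[R]_(1 + n) := block_mx 1%:M 0 0 Q'.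
suff : (exists (Q : 'M[R]_(1 + n)) (d : 'rV[R]_(1 + n)),
  Q *m Q^T = 1%:M /\ (A : 'M[R]_(1 + n)) = Q^T *m diag_mx d *m Q) by [].
exists (Bq *m H), (row_mx (lam%:M : 'rV[R]_1) d'); split.
  rewrite trmx_mul HT mulmxA -(mulmxA Bq) HH mulmx1 /Bq tr_block_mx.
  rewrite mulmx_block !trmx0 !mulmx0 !mul0mx !addr0 !add0r tr_scalar_mx mulmx1.
  by rewrite hQ' -scalar_mx_block.
rewrite trmx_mul HT diag_mx_row.
have -> : diag_mx (lam%:M : 'rV[R]_1) = lam%:M.
  by apply/matrixP => i j; rewrite (ord1 i) (ord1 j) !mxE.
have E1 : (block_mx 1%:M 0 0 Q'^T : 'M[R]_(1+n)) *m block_mx lam%:M 0 0 (diag_mx d')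
   *m (block_mx 1%:M 0 0 Q' : 'M[R]_(1 + n)) = block_mx lam%:M 0 0 A'.
  rewrite mulmx_block !mulmx0 !mul0mx !addr0 !add0r mul1mx.
  by rewrite mulmx_block !mulmx0 !mul0mx !addr0 !add0r mulmx1 -hA'Q.
have -> : A = H *m A1' *m H by rewrite /A1' A1def !mulmxA HH mul1mx -mulmxA HH mulmx1.
rewrite eA1 -E1 /Bq tr_block_mx !trmx0 tr_scalar_mx !mulmxA.
done.
Qed.

End Spectral2.

Section Conseq.
Variable R : realType.
Implicit Types (n : nat).

Lemma nrm2_e n (i : 'I_n) : nrm2 ('e_i : 'rV[R]_n) = 1.
Proof. by rewrite /nrm2 trmx_delta mul_delta_mx mxE !eqxx. Qed.

Lemma qf_cong n (W A : 'M[R]_n) y : qf (W *m A *m W^T) y = qf A (y *m W).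
Proof. by rewrite /qf /bil trmx_mul !mulmxA. Qed.

Lemma qf_diag n (d : 'rV[R]_n) y : qf (diag_mx d) y = \sum_i d 0 i * y 0 i ^+ 2.
Proof.
rewrite /qf bilE; apply: eq_bigr => i _; rewrite (bigD1 i) //= big1 ?addr0.
  by rewrite mxE eqxx mulr1n; ring.
by move=> j /negbTE ji; rewrite mxE eq_sym ji mulr0n mulr0 mul0r.
Qed.

Lemma qf_spec n (Q : 'M[R]_n) (d : 'rV[R]_n) w :
  qf (Q^T *m diag_mx d *m Q) w = \sum_i d 0 i * (w *m Q^T) 0 i ^+ 2.
Proof.
rewrite -qf_diag -{2}[Q]trmxK -qf_cong; by rewrite trmxK.
Qed.

Lemma QtQ n (Q : 'M[R]_n) : Q *m Q^T = 1%:M -> Q^T *m Q = 1%:M.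
Proof. exact: mulmx1C. Qed.

Lemma rowQ n (Q : 'M[R]_n) i : Q *m Q^T = 1%:M -> row i Q *m Q^T = 'e_i.
Proof. by move=> hQ; rewrite rowE -mulmxA hQ mulmx1. Qed.

Lemma nrm2_rowQ n (Q : 'M[R]_n) i : Q *m Q^T = 1%:M -> nrm2 (row i Q) = 1.
Proof.
move=> hQ; rewrite /nrm2 {2}rowE trmx_mul mulmxA rowQ //.
by rewrite -/(nrm2 _) nrm2_e.
Qed.

Lemma nrm2_mulQt n (Q : 'M[R]_n) w : Q *m Q^T = 1%:M -> nrm2 (w *m Q^T) = nrm2 w.
Proof.
move=> hQ; rewrite /nrm2 trmx_mul trmxK mulmxA -(mulmxA w) QtQ //.
by rewrite mulmx1.
Qed.

Lemma d_qf n (Q : 'M[R]_n) (d : 'rV[R]_n) i : Q *m Q^T = 1%:M ->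
  d 0 i = qf (Q^T *m diag_mx d *m Q) (row i Q).
Proof.
move=> hQ; rewrite qf_spec rowQ // (bigD1 i) //= big1 ?addr0.
  by rewrite mxE !eqxx /= expr1n mulr1.
by move=> j ji; rewrite mxE eqxx andTb (negbTE ji) /= expr0n mulr0.
Qed.

Lemma det_spec n (Q : 'M[R]_n) (d : 'rV[R]_n) : Q *m Q^T = 1%:M ->
  \det (Q^T *m diag_mx d *m Q) = \prod_i d 0 i.
Proof.
move=> hQ; rewrite !det_mulmx det_tr det_diag mulrC mulrA.
have := congr1 determinant hQ; rewrite det_mulmx det_tr det1 => ->.
by rewrite mul1r.
Qed.

Lemma tr_spec n (Q : 'M[R]_n) (d : 'rV[R]_n) : Q *m Q^T = 1%:M ->
  \tr (Q^T *m diag_mx d *m Q) = \sum_i d 0 i.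
Proof.
move=> hQ; rewrite mxtrace_mulC mulmxA hQ mul1mx mxtrace_diag //.
Qed.

Lemma entry_qf n (Q C : 'M[R]_n) i : (Q *m C *m Q^T) i i = qf C (row i Q).
Proof.
rewrite /qf bilE mxE; under eq_bigr => k _ do rewrite !mxE big_distrl /=.
rewrite exchange_big /=; apply: eq_bigr => j _; apply: eq_bigr => k _.
by rewrite !mxE.
Qed.

Lemma trC_spec n (Q C : 'M[R]_n) (d : 'rV[R]_n) : Q *m Q^T = 1%:M ->
  \tr (C *m (Q^T *m diag_mx d *m Q)) = \sum_i d 0 i * qf C (row i Q).
Proof.
move=> hQ; rewrite !mulmxA mxtrace_mulC !mulmxA /mxtrace.
apply: eq_bigr => i _; rewrite mul_mx_diag mxE entry_qf mulrC //.
Qed.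

Lemma eig_ge n (Q : 'M[R]_n) (d : 'rV[R]_n) (e : R) : Q *m Q^T = 1%:M ->
  (forall w, 0 <= qf (Q^T *m diag_mx d *m Q - e%:M) w) -> forall i, e <= d 0 i.
Proof.
move=> hQ h i; have := h (row i Q).
rewrite /qf bilMDl bilMN -scalemx1 bilMZl bil1 -/(nrm2 _) nrm2_rowQ //.
by rewrite -/(qf _ _) -d_qf // mulr1 subr_ge0.
Qed.

Lemma eig_gt n (Q : 'M[R]_n) (d : 'rV[R]_n) : Q *m Q^T = 1%:M ->
  (forall w, w != 0 -> 0 < qf (Q^T *m diag_mx d *m Q) w) -> forall i, 0 < d 0 i.
Proof.
move=> hQ h i; rewrite (d_qf d i hQ); apply: h.
apply/eqP => h0; have := nrm2_rowQ i hQ; rewrite h0.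
by rewrite /nrm2 mul0mx mxE => /eqP; rewrite eq_sym oner_eq0.
Qed.

Lemma ln_prod (I : finType) (F : I -> R) : (forall i, 0 < F i) ->
  ln (\prod_i F i) = \sum_i ln (F i).
Proof.
move=> hF; rewrite /index_enum; elim: (Finite.enum I) => [|i s IH].
  by rewrite !big_nil ln1.
rewrite !big_cons lnM ?IH // posrE ?hF //.
by rewrite prodr_gt0.
Qed.

Lemma prod_lt (I : finType) (F G : I -> R) j :
  (forall i, 0 < F i <= G i) -> F j < G j -> \prod_i F i < \prod_i G i.
Proof.
move=> h hj; rewrite (bigD1 j) //= [X in _ < X](bigD1 j) //=.
have P1 : 0 < \prod_(i | i != j) F i.
  by apply: prodr_gt0 => i _; case/andP: (h i).
have P12 : \prod_(i | i != j) F i <= \prod_(i | i != j) G i.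
  by apply: ler_prod => i _; case/andP: (h i) => /ltW -> ->.
have P2 : 0 < \prod_(i | i != j) G i by apply: lt_le_trans P12.
case/andP: (h j) => Fj0 _.
apply: (@le_lt_trans _ _ (F j * \prod_(i | i != j) G i)).
  by rewrite ler_pM2l.
by rewrite ltr_pM2r.
Qed.

End Conseq.

Section DetMid.
Variable R : realType.

Lemma qf_diag_e n (m : 'rV[R]_n) i : qf (diag_mx m) 'e_i = m 0 i.
Proof.
rewrite qf_diag (bigD1 i) //= big1 ?addr0.
  by rewrite mxE !eqxx /= expr1n mulr1.
by move=> j ji; rewrite mxE eqxx andTb (negbTE ji) /= expr0n mulr0.
Qed.

Lemma det_mid n (X1 X2 : 'M[R]_n) : X1^T = X1 -> X2^T = X2 ->
  (forall w, w != 0 -> 0 < qf X1 w) -> (forall w, w != 0 -> 0 < qf X2 w) ->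
  X1 != X2 -> \det X1 * \det X2 < \det (2^-1 *: (X1 + X2)) ^+ 2.
Proof.
move=> hX1 hX2 p1 p2 neq.
have [Q [d [hQ eX1]]] := spectral hX1.
have dpos : forall i, 0 < d 0 i by apply: eig_gt hQ _; rewrite -eX1.
pose s := \row_i (Num.sqrt (d 0 i))^-1.
have [L Ldef] : exists L, L = diag_mx s *m Q by eexists.
have LX1 : L *m X1 *m L^T = 1%:M.
  rewrite Ldef eX1 trmx_mul tr_diag_mx !mulmxA -(mulmxA (diag_mx s) Q Q^T) hQ mulmx1.
  rewrite -(mulmxA (diag_mx s *m diag_mx d) Q Q^T) hQ mulmx1 !mulmx_diag.
  apply/matrixP => i j; rewrite !mxE.
  have s0 : Num.sqrt (d 0 i) != 0 by rewrite gt_eqF // sqrtr_gt0.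
  have -> : (Num.sqrt (d 0 i))^-1 * d 0 i * (Num.sqrt (d 0 i))^-1 = 1.
    rewrite -{2}(sqr_sqrtr (ltW (dpos i))); field; done.
  done.
set E := L *m X2 *m L^T.
have hE : E^T = E by rewrite /E !trmx_mul trmxK hX2 mulmxA.
have [V [m [hV eE]]] := spectral hE.
have [W Wdef] : exists W, W = V *m L by eexists.
have cong : forall X, W *m X *m W^T = V *m (L *m X *m L^T) *m V^T.
  by move=> X; rewrite Wdef trmx_mul !mulmxA.
have WX1 : W *m X1 *m W^T = 1%:M by rewrite cong LX1 mulmx1 hV.
have WX2 : W *m X2 *m W^T = diag_mx m.
  rewrite cong -/E eE !mulmxA hV mul1mx -mulmxA hV mulmx1 //.
pose a := \row_i (2^-1 * (1 + m 0 i)).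
have WXm : W *m (2^-1 *: (X1 + X2)) *m W^T = diag_mx a.
  rewrite -scalemxAr -scalemxAl mulmxDr mulmxDl WX1 WX2.
  apply/matrixP => i j; rewrite !mxE; case: (i == j) => /=; ring.
set w := \det W.
have dW : forall X, \det (W *m X *m W^T) = w ^+ 2 * \det X.
  by move=> X; rewrite !det_mulmx det_tr -/w; ring.
have dX1 : w ^+ 2 * \det X1 = 1 by rewrite -dW WX1 det1.
have dX2 : w ^+ 2 * \det X2 = \prod_i m 0 i by rewrite -dW WX2 det_diag.
have dXm : w ^+ 2 * \det (2^-1 *: (X1 + X2)) = \prod_i a 0 i.
  by rewrite -dW WXm det_diag.
have w0 : w != 0 by apply: contra_eq_neq dX1 => ->; rewrite expr0n mul0r eq_sym oner_eq0.
have Wu : W \in unitmx by rewrite unitmxE unitfE.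
have mpos : forall i, 0 < m 0 i.
  move=> i; rewrite -qf_diag_e -WX2 qf_cong; apply: p2.
  apply/eqP => h; have := congr1 (fun M => M *m invmx W) h.
  rewrite mulmxK // mul0mx => /eqP; apply/negP.
  by apply/eqP => h'; have := @nrm2_e R _ i; rewrite h' /nrm2 mul0mx mxE => /eqP; rewrite eq_sym oner_eq0.
have [j hj] : exists j, m 0 j != 1.
  case: (pickP (fun j => m 0 j != 1)) => [j hj|hall]; first by exists j.
  exfalso; move/negP: neq; apply; apply/eqP.
  have canc : forall A B, W *m A *m W^T = W *m B *m W^T -> A = B.
    move=> A B h; have := congr1 (fun M => invmx W *m M *m invmx W^T) h.
    by rewrite !mulmxA !mulmxK ?unitmx_tr // !mulVmx // !mul1mx.
  apply: canc; rewrite WX1 WX2; apply/matrixP => i k; rewrite !mxE.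
  by have := hall i; rewrite /= => /negbFE/eqP ->.
have u0 : 0 < w ^+ 2 by rewrite exprn_even_gt0 //.
set u := w ^+ 2 in dX1 dX2 dXm u0.
have e1 : \det X1 = u^-1 * 1 by rewrite -dX1 mulKf // gt_eqF.
have e2 : \det X2 = u^-1 * \prod_i m 0 i by rewrite -dX2 mulKf // gt_eqF.
have e3 : \det (2^-1 *: (X1 + X2)) = u^-1 * \prod_i a 0 i by rewrite -dXm mulKf // gt_eqF.
rewrite e1 e2 e3.
have hP : \prod_i m 0 i < (\prod_i a 0 i) ^+ 2.
  rewrite -prodrXl; apply: (prod_lt (j:=j)).
    move=> i; rewrite mpos /= /a mxE -subr_ge0.
    have -> : (2^-1 * (1 + m 0 i)) ^+ 2 - m 0 i = (2^-1 * (m 0 i - 1)) ^+ 2 by field.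
    exact: sqr_ge0.
  rewrite /a mxE -subr_gt0.
  have -> : (2^-1 * (1 + m 0 j)) ^+ 2 - m 0 j = (2^-1 * (m 0 j - 1)) ^+ 2 by field.
  rewrite exprn_even_gt0 // mulf_neq0 // ?invr_eq0 ?pnatr_eq0 //.
  by rewrite subr_eq0.
have ui : 0 < u^-1 by rewrite invr_gt0.
have -> : u^-1 * 1 * (u^-1 * \prod_i m 0 i) = u^-1 ^+ 2 * \prod_i m 0 i by ring.
have -> : (u^-1 * \prod_i a 0 i) ^+ 2 = u^-1 ^+ 2 * (\prod_i a 0 i) ^+ 2 by ring.
by rewrite ltr_pM2l // exprn_gt0.
Qed.

End DetMid.

Section Topo.
Variable R : realType.
Local Open Scope classical_set_scope.
Local Open Scope ring_scope.

Lemma closed_and (T : topologicalType) (A B : T -> Prop) :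
  closed [set v | A v] -> closed [set v | B v] -> closed [set v | A v /\ B v].
Proof. by move=> hA hB; exact: closedI. Qed.

Lemma closed_and3 (T : topologicalType) (A B C : T -> Prop) :
  closed [set v | A v] -> closed [set v | B v] -> closed [set v | C v] ->
  closed [set v | [/\ A v, B v & C v]].
Proof.
move=> hA hB hC.
have -> : [set v | [/\ A v, B v & C v]] = [set v | A v /\ (B v /\ C v)].
  by apply/seteqP; split => v /=; [case | case=> ? []].
by apply: closed_and => //; exact: closed_and.
Qed.

Lemma closed_all (T : topologicalType) (I : Type) (A : I -> T -> Prop) :
  (forall i, closed [set v | A i v]) -> closed [set v | forall i, A i v].
Proof.
move=> h.
have -> : [set v | forall i, A i v] = \bigcap_(i in setT) [set v | A i v].
  apply/seteqP; split => v /= hv i; first by move=> _; exact: hv.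
  exact: hv.
by apply: closed_bigI => i _; exact: h.
Qed.

Lemma closed_imp (T : topologicalType) (P : Prop) (A : T -> Prop) :
  closed [set v | A v] -> closed [set v | P -> A v].
Proof.
move=> h; case: (pselect P) => hP.
  have -> : [set v | P -> A v] = [set v | A v].
    by apply/seteqP; split => v /= hv; [exact: hv | move=> _].
  exact: h.
have -> : [set v | P -> A v] = setT.
  by apply/seteqP; split => v //= _ /hP.
exact: closedT.
Qed.

Lemma closed_eqf (T : topologicalType) (f g : T -> R) :
  continuous f -> continuous g -> closed [set v | f v = g v].
Proof.
move=> hf hg.
have -> : [set v | f v = g v] = (fun v => f v + (-1) * g v) @^-1` [set x | x = 0].
  apply/seteqP; split => v /=; first by move=> ->; rewrite mulN1r subrr.
  by rewrite mulN1r => /eqP; rewrite subr_eq0 => /eqP.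
move: (cont_add hf (cont_mul (@cont_cst R T (-1)) hg)) => /continuous_closedP.
by apply; exact: closed_eq.
Qed.

Lemma closed_lef (T : topologicalType) (f : T -> R) c :
  continuous f -> closed [set v | f v <= c].
Proof.
move=> hf.
have -> : [set v | f v <= c] = f @^-1` [set x | x <= c] by [].
by move: hf => /continuous_closedP; apply; exact: closed_le.
Qed.

Lemma closed_gef (T : topologicalType) (f : T -> R) :
  continuous f -> closed [set v | 0 <= f v].
Proof.
move=> hf.
have -> : [set v | 0 <= f v] = f @^-1` [set x | 0 <= x] by [].
by move: hf => /continuous_closedP; apply; exact: closed_ge.
Qed.

Lemma cont_bil (T : topologicalType) n (F : T -> 'M[R]_n) (a b : 'rV[R]_n) :
  (forall i j, continuous (fun v => F v i j)) ->
  continuous (fun v => bil (F v) a b).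
Proof.
move=> h.
have -> : (fun v => bil (F v) a b) = (fun v => \sum_i \sum_j a 0 i * F v i j * b 0 j).
  by apply: funext => v; rewrite bilE.
apply: cont_sum => i; apply: cont_sum => j.
apply: cont_mul; last exact: cont_cst.
by apply: cont_mul; [exact: cont_cst | exact: h].
Qed.

Lemma cont_det (T : topologicalType) n (F : T -> 'M[R]_n) :
  (forall i j, continuous (fun v => F v i j)) ->
  continuous (fun v => \det (F v)).
Proof.
move=> h.
have -> : (fun v => \det (F v)) =
  (fun v => \sum_(s : 'S_n) (-1) ^+ s * \prod_i F v i (s i)) by [].
apply: cont_sum => s; apply: cont_mul; first exact: cont_cst.
by apply: cont_prod => i; exact: h.
Qed.

End Topo.

Section Fro.
Variable R : realType.

Definition fro2 n (A : 'M[R]_n) := \sum_i \sum_j A i j ^+ 2.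

Lemma fro2_ge0 n (A : 'M[R]_n) : 0 <= fro2 A.
Proof. by apply: sumr_ge0 => i _; apply: sumr_ge0 => j _; exact: sqr_ge0. Qed.

Lemma frob_sq n (A : 'M[R]_n) : frob A ^+ 2 = fro2 A.
Proof. by rewrite /frob sqr_sqrtr // fro2_ge0. Qed.

Lemma fro2_gt0 n (A : 'M[R]_n) : A != 0 -> 0 < fro2 A.
Proof.
move=> hA; rewrite lt_def fro2_ge0 andbT; apply: contra hA => /eqP h.
apply/eqP/matrixP => i j; rewrite mxE.
have h1 := psumr_eq0P (fun i _ => sumr_ge0 _ (fun j _ => sqr_ge0 (A i j))) h (i:=i) isT.
have := psumr_eq0P (fun j _ => sqr_ge0 (A i j)) h1 (i:=j) isT.
by move/eqP; rewrite sqrf_eq0 => /eqP.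
Qed.

Lemma qf_cV n (A : 'M[R]_n) (v : 'cV[R]_n) : (v^T *m A *m v) 0 0 = qf A v^T.
Proof. by rewrite /qf /bil trmxK. Qed.

Lemma qf_shift n (X : 'M[R]_n) e w : qf (X - e%:M) w = qf X w - e * nrm2 w.
Proof. by rewrite /qf bilMDl bilMN -scalemx1 bilMZl bil1. Qed.

Lemma nrm2_gt0 n (w : 'rV[R]_n) : w != 0 -> 0 < nrm2 w.
Proof.
move=> hw; rewrite lt_def nrm2_ge0 andbT; apply: contra hw => /eqP h.
by apply/eqP; exact: nrm2_eq0.
Qed.

Lemma ln_bound (k c d : R) : 0 < k -> 0 < c -> 0 < d ->
  k * ln d <= c / 2 * d + k * ln (2 * k / c).
Proof.
move=> k0 c0 d0.
set x := c / (2 * k) * d.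
have x0 : 0 < x by rewrite /x mulr_gt0 // divr_gt0 // mulr_gt0.
have y0 : 0 < 2 * k / c by rewrite divr_gt0 // mulr_gt0.
have ed : d = x * (2 * k / c) by rewrite /x; field; rewrite ?gt_eqF.
have lx : ln x <= x - 1.
  have := @le_ln1Dx R (x - 1); rewrite (addrC 1 (x - 1)) subrK; apply.
  lra.
rewrite {1}ed lnM ?posrE // mulrDr lerD2r.
have -> : c / 2 * d = k * x by rewrite /x; field; rewrite ?gt_eqF.
by rewrite ler_pM2l //; apply: le_trans lx _; rewrite lerBlDr lerDl.
Qed.

End Fro.

Section Main.
Variables (R : realType) (p : nat) (T : eqType) (s : 'I_p -> T)
  (Nb : 'I_p -> {set 'I_p}) (nu eps gamma : R) (B S : 'M[R]_p).
Hypotheses (hNb : forall i, i \notin Nb i) (hnu : p%:R < nu) (heps : 0 < eps)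
  (hgam : 0 < gamma) (hB : pdmx B) (hS : psdmx S).

Lemma M_props (X : 'M[R]_p) : setM eps X ->
  [/\ X^T = X, forall w, 0 <= qf (X - eps%:M) w & forall w, w != 0 -> 0 < qf X w].
Proof.
case=> hX [_ hpsd].
have h2 : forall w, 0 <= qf (X - eps%:M) w.
  by move=> w; rewrite -[w]trmxK -qf_cV; exact: hpsd.
split => // w w0; have := h2 w; rewrite qf_shift subr_ge0 => h.
by apply: lt_le_trans h; rewrite mulr_gt0 // nrm2_gt0.
Qed.

Lemma M_spec (X : 'M[R]_p) : setM eps X -> exists Q (d : 'rV[R]_p),
  [/\ Q *m Q^T = 1%:M, X = Q^T *m diag_mx d *m Q & forall i, eps <= d 0 i].
Proof.
case/M_props => hX h _; have [Q [d [hQ eX]]] := spectral hX.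
exists Q, d; split => //; apply: eig_ge hQ _; by rewrite -eX.
Qed.

Lemma det_M (X : 'M[R]_p) : setM eps X -> eps ^+ p <= \det X.
Proof.
case/M_spec => Q [d [hQ -> hd]]; rewrite det_spec //.
have -> : eps ^+ p = \prod_(i < p) eps by rewrite prodr_const card_ord.
by apply: ler_prod => i _; rewrite hd (ltW heps).
Qed.

Lemma det_M_gt0 (X : 'M[R]_p) : setM eps X -> 0 < \det X.
Proof. by move=> hX; apply: lt_le_trans (det_M hX); exact: exprn_gt0. Qed.

Lemma tr_M_ge0 (X : 'M[R]_p) : setM eps X -> 0 <= \tr X.
Proof.
case/M_spec => Q [d [hQ -> hd]]; rewrite tr_spec //.
by apply: sumr_ge0 => i _; apply: le_trans (hd i); exact: ltW.
Qed.

Lemma entry_M (X : 'M[R]_p) : setM eps X -> forall i j, `|X i j| <= \tr X.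
Proof.
case/M_spec => Q [d [hQ -> hd]] i j; rewrite tr_spec //.
have hQ1 : forall k l, `|Q k l| <= 1.
  move=> k l; have := congr1 (fun M : 'M[R]_p => M l l) (QtQ hQ).
  rewrite !mxE eqxx mulr1n => h.
  have : Q k l ^+ 2 <= 1.
    rewrite -h (bigD1 k) //= mxE expr2 lerDl sumr_ge0 // => m _.
    by rewrite mxE -expr2 sqr_ge0.
  by move=> h2; rewrite ler_norml; apply/andP; split; nra.
rewrite mxE; apply: le_trans (ler_norm_sum _ _ _) _.
apply: ler_sum => k _; rewrite mul_mx_diag !mxE normrM normrM.
have dk : 0 <= d 0 k by apply: le_trans (hd k); exact: ltW.
rewrite (ger0_norm dk).
have := hQ1 k i; have := hQ1 k j.
have := normr_ge0 (Q k i); have := normr_ge0 (Q k j).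
move: (`|Q k i|) (`|Q k j|) => a b hb ha hb1 ha1.
have hab : a * b <= 1 by nra.
nra.
Qed.

Lemma C_lb : exists2 c0, 0 < c0 & forall w, c0 * nrm2 w <= qf (invmx B + S) w.
Proof.
case: hB => hBs hBp.
have hBp' : forall w, w != 0 -> 0 < qf B w.
  move=> w w0; rewrite -[w]trmxK -qf_cV; apply: hBp.
  by apply: contra w0 => /eqP h; rewrite -[w]trmxK h trmx0.
have [Q [e [hQ eB]]] := spectral hBs.
have epos : forall i, 0 < e 0 i by apply: eig_gt hQ _; rewrite -eB.
set ei := \row_i (e 0 i)^-1.
have hinv : invmx B = Q^T *m diag_mx ei *m Q.
  have h1 : B *m (Q^T *m diag_mx ei *m Q) = 1%:M.
    rewrite eB !mulmxA -(mulmxA (Q^T *m diag_mx e) Q Q^T) hQ mulmx1.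
    rewrite -(mulmxA Q^T (diag_mx e)) mulmx_diag.
    have -> : diag_mx (\row_j (e 0 j * ei 0 j)) = 1%:M.
      apply/matrixP => i j; rewrite !mxE; case: (i == j) => //=.
      by rewrite mulfV ?gt_eqF.
    by rewrite mulmx1 QtQ.
  have [Bu _] := mulmx1_unit h1.
  by rewrite -[invmx B]mulmx1 -h1 (mulmxA (invmx B) B) (mulVmx Bu) mul1mx.
have sum0 : 0 <= \sum_i e 0 i by apply: sumr_ge0 => i _; exact: ltW.
have s1 : 0 < 1 + \sum_i e 0 i by lra.
exists (1 + \sum_i e 0 i)^-1; first by rewrite invr_gt0.
move=> w.
have eq1 : qf (invmx B + S) w = qf (invmx B) w + qf S w by rewrite /qf bilMDl.
have qS : 0 <= qf S w.
  by case: hS => _ h; rewrite -[w]trmxK -qf_cV; exact: h.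
have qB : (1 + \sum_i e 0 i)^-1 * nrm2 w <= qf (invmx B) w.
  rewrite hinv qf_spec -(nrm2_mulQt w hQ) nrm2E mulr_sumr; apply: ler_sum => i _.
  have -> : ei 0 i = (e 0 i)^-1 by rewrite mxE.
  rewrite ler_wpM2r ?sqr_ge0 // lef_pV2 ?posrE //.
  have : e 0 i <= \sum_j e 0 j.
    by rewrite (bigD1 i) //= lerDl sumr_ge0 // => j _; exact: ltW.
  lra.
rewrite eq1; lra.
Qed.

Lemma P_lb c0 : 0 < c0 -> (forall w, c0 * nrm2 w <= qf (invmx B + S) w) ->
  forall (X Y : 'M[R]_p), setM eps X ->
  c0 / 2 * \tr X - p%:R * ((nu - p%:R) * ln (2 * (nu - p%:R) / c0))
    + gamma / 2 * fro2 (X - Y) <= Pgamma nu gamma B S X Y.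
Proof.
move=> c00 hC X Y hX.
have [Q [d [hQ eX hd]]] := M_spec hX.
have k0 : 0 < nu - p%:R by rewrite subr_gt0.
have dpos : forall i, 0 < d 0 i by move=> i; exact: lt_le_trans heps (hd i).
have htr : c0 * \tr X <= \tr ((invmx B + S) *m X).
  rewrite eX trC_spec // tr_spec // mulr_sumr; apply: ler_sum => i _.
  rewrite [c0 * _]mulrC ler_wpM2l ?(ltW (dpos i)) //.
  by have := hC (row i Q); rewrite nrm2_rowQ // mulr1.
have hln : (nu - p%:R) * ln (\det X) <=
    c0 / 2 * \tr X + p%:R * ((nu - p%:R) * ln (2 * (nu - p%:R) / c0)).
  rewrite eX det_spec // tr_spec // ln_prod // !mulr_sumr.
  have -> : p%:R * ((nu - p%:R) * ln (2 * (nu - p%:R) / c0)) =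
      \sum_(i < p) ((nu - p%:R) * ln (2 * (nu - p%:R) / c0)).
    by rewrite sumr_const card_ord mulr_natl.
  rewrite -big_split /=; apply: ler_sum => i _; exact: ln_bound.
rewrite /Pgamma frob_sq; lra.
Qed.

End Main.

Section Main2.
Variables (R : realType) (p : nat) (T : eqType) (s : 'I_p -> T)
  (Nb : 'I_p -> {set 'I_p}) (nu eps gamma : R) (B S : 'M[R]_p).
Hypotheses (hNb : forall i, i \notin Nb i) (hnu : p%:R < nu) (heps : 0 < eps)
  (hgam : 0 < gamma) (hB : pdmx B) (hS : psdmx S).
Local Open Scope classical_set_scope.
Local Open Scope ring_scope.

Local Notation P := (Pgamma nu gamma B S).
Definition mid (A A' : 'M[R]_p) := 2^-1 *: (A + A').

Lemma mid_M X X' : setM eps X -> setM eps X' -> setM eps (mid X X').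
Proof.
case=> hX [_ hpX]; case=> hX' [_ hpX'].
have e : mid X X' - eps%:M = 2^-1 *: ((X - eps%:M) + (X' - eps%:M)).
  apply/(@matrixP R p p) => i j; rewrite /mid !mxE; by case: (i == j) => /=; field.
split; first by rewrite /symmx /mid linearZ /= linearD /= hX hX'.
rewrite e; split.
  by rewrite /symmx linearZ /= linearD /= !linearB /= hX hX' tr_scalar_mx.
move=> v; rewrite qf_cV /qf bilMZl bilMDl -!/(qf _ _) -!qf_cV.
by rewrite mulr_ge0 // ?invr_ge0 ?ler0n // addr_ge0.
Qed.

Lemma mid_N Y Y' : setN s Nb Y -> setN s Nb Y' -> setN s Nb (mid Y Y').
Proof.
case=> h1 h2 h3; case=> h1' h2' h3'; split.
- by move=> i j hij; rewrite !mxE (h1 _ _ hij) (h1' _ _ hij).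
- by move=> i j k l a b c d; rewrite !mxE (h2 _ _ _ _ a b c d) (h2' _ _ _ _ a b c d).
- by move=> i j a b; rewrite !mxE (h3 _ _ a b) (h3' _ _ a b) addr0 mulr0.
Qed.

Lemma fro2_mid (A A' : 'M[R]_p) :
  fro2 (mid A A') = 2^-1 * (fro2 A + fro2 A') - 4^-1 * fro2 (A - A').
Proof.
rewrite /fro2.
transitivity (\sum_i \sum_j (2^-1 * (A i j ^+ 2 + A' i j ^+ 2) - 4^-1 * (A - A') i j ^+ 2)).
  by apply: eq_bigr => i _; apply: eq_bigr => j _; rewrite !mxE; field.
under eq_bigr => i _ do rewrite sumrB -!mulr_sumr big_split /=.
by rewrite sumrB -!mulr_sumr big_split.
Qed.

Lemma mid_strict X Y X' Y' : setM eps X -> setM eps X' -> (X != X') || (Y != Y') ->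
  P (mid X X') (mid Y Y') < 2^-1 * (P X Y + P X' Y').
Proof.
move=> hX hX' hne.
have hXm := mid_M hX hX'.
have k0 : 0 < nu - p%:R by rewrite subr_gt0.
have etr : \tr ((invmx B + S) *m mid X X') =
    2^-1 * (\tr ((invmx B + S) *m X) + \tr ((invmx B + S) *m X')).
  by rewrite /mid -scalemxAr mulmxDr mxtraceZ mxtraceD.
have ed : mid X X' - mid Y Y' = mid (X - Y) (X' - Y').
  by rewrite /mid -scalerBr opprD addrACA.
rewrite /Pgamma !frob_sq ed fro2_mid etr.
have F0 := fro2_ge0 ((X - Y) - (X' - Y')).
have g0 : 0 < gamma / 2 by rewrite divr_gt0.
case: (eqVneq X X') => [eX|nX].
  move: hne; rewrite eX eqxx /= => nY.
  have -> : mid X' X' = X'.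
    by rewrite /mid -mulr2n -[X' *+ 2]scaler_nat scalerA mulVf ?scale1r // pnatr_eq0.
  have nz : X' - Y - (X' - Y') != 0.
    rewrite opprB addrC addrA subrK subr_eq0 eq_sym; exact: nY.
  have hF : 0 < gamma / 2 * (4^-1 * fro2 (X' - Y - (X' - Y'))).
    by rewrite mulr_gt0 // mulr_gt0 ?invr_gt0 ?ltr0n // fro2_gt0.
  lra.
have [sX _ pX] := M_props heps hX.
have [sX' _ pX'] := M_props heps hX'.
have hdm := det_mid sX sX' pX pX' nX.
have d1 := det_M_gt0 heps hX.
have d2 := det_M_gt0 heps hX'.
have d3 := det_M_gt0 heps hXm.
have hln : ln (\det X) + ln (\det X') < 2 * ln (\det (mid X X')).
  rewrite -lnM ?posrE // -[2]/(1 *+ 2) mulr_natl -lnXn // ltr_ln ?posrE //.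
    by rewrite mulr_gt0.
  by rewrite exprn_gt0.
have hln2 : (nu - p%:R) * (ln (\det X) + ln (\det X')) <
    (nu - p%:R) * (2 * ln (\det (mid X X'))) by rewrite ltr_pM2l.
have hF : 0 <= gamma / 2 * (4^-1 * fro2 (X - Y - (X' - Y'))).
  by rewrite mulr_ge0 // ?(ltW g0) // mulr_ge0 // invr_ge0 ler0n.
lra.
Qed.

End Main2.

Section Main3.
Variables (R : realType) (p : nat) (T : eqType) (s : 'I_p -> T)
  (Nb : 'I_p -> {set 'I_p}) (nu eps gamma : R) (B S : 'M[R]_p).
Hypotheses (hNb : forall i, i \notin Nb i) (hnu : p%:R < nu) (heps : 0 < eps)
  (hgam : 0 < gamma) (hB : pdmx B) (hS : psdmx S).
Local Open Scope classical_set_scope.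
Local Open Scope ring_scope.

Local Notation P := (Pgamma nu gamma B S).
Local Notation V := 'rV[R]_(p * p + p * p).

Definition Xof (v : V) : 'M[R]_p := vec_mx (lsubmx v).
Definition Yof (v : V) : 'M[R]_p := vec_mx (rsubmx v).
Definition toV (X Y : 'M[R]_p) : V := row_mx (mxvec X) (mxvec Y).

Lemma XofV X Y : Xof (toV X Y) = X.
Proof. by rewrite /Xof /toV row_mxKl mxvecK. Qed.
Lemma YofV X Y : Yof (toV X Y) = Y.
Proof. by rewrite /Yof /toV row_mxKr mxvecK. Qed.

Lemma Xof_entry v i j : Xof v i j = v 0 (lshift (p * p) (mxvec_index i j)).
Proof. by rewrite /Xof !mxE. Qed.
Lemma Yof_entry v i j : Yof v i j = v 0 (rshift (p * p) (mxvec_index i j)).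
Proof. by rewrite /Yof !mxE. Qed.

Lemma contX i j : continuous (fun v : V => Xof v i j).
Proof.
have -> : (fun v : V => Xof v i j) = (fun v => v 0 (lshift (p * p) (mxvec_index i j))).
  by apply: funext => v; rewrite Xof_entry.
exact: cont_coord.
Qed.
Lemma contY i j : continuous (fun v : V => Yof v i j).
Proof.
have -> : (fun v : V => Yof v i j) = (fun v => v 0 (rshift (p * p) (mxvec_index i j))).
  by apply: funext => v; rewrite Yof_entry.
exact: cont_coord.
Qed.

Definition G (v : V) : R :=
  - (nu - p%:R) * ln (Num.max (\det (Xof v)) (eps ^+ p))
  + \tr ((invmx B + S) *m Xof v) + gamma / 2 * fro2 (Xof v - Yof v).

Lemma G_P v : setM eps (Xof v) -> G v = P (Xof v) (Yof v).
Proof. by move=> hX; rewrite /G /Pgamma frob_sq max_l // det_M. Qed.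

Lemma cont_sub (U : topologicalType) (f g : U -> R) :
  continuous f -> continuous g -> continuous (fun x => f x - g x).
Proof.
move=> hf hg.
have -> : (fun x => f x - g x) = (fun x => f x + (-1) * g x).
  by apply: funext => x; rewrite mulN1r.
exact: cont_add hf (cont_mul (@cont_cst R U (-1)) hg).
Qed.

Lemma contG : continuous G.
Proof.
have hdet : continuous (fun v => \det (Xof v)) by apply: cont_det; exact: contX.
have hmax : continuous (fun v => Num.max (\det (Xof v)) (eps ^+ p)).
  move=> x; exact: (@continuous_max R _ (fun v => \det (Xof v)) (fun _ => eps ^+ p) x
    (hdet x) (@cont_cst R _ _ x)).
have hln : continuous (fun v => ln (Num.max (\det (Xof v)) (eps ^+ p))).
  move=> x; apply: (continuous_comp (hmax x)); apply: continuous_ln.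
  by apply: lt_le_trans (exprn_gt0 p heps) _; rewrite le_max lexx orbT.
have htr : continuous (fun v => \tr ((invmx B + S) *m Xof v)).
  have -> : (fun v => \tr ((invmx B + S) *m Xof v)) =
    (fun v => \sum_i \sum_j (invmx B + S) i j * Xof v j i).
    by apply: funext => v; rewrite /mxtrace; apply: eq_bigr => i _; rewrite mxE.
  apply: cont_sum => i; apply: cont_sum => j; apply: cont_mul; first exact: cont_cst.
  exact: contX.
have hfro : continuous (fun v => fro2 (Xof v - Yof v)).
  have -> : (fun v => fro2 (Xof v - Yof v)) =
    (fun v => \sum_i \sum_j ((Xof v i j - Yof v i j) * (Xof v i j - Yof v i j))).
    by apply: funext => v; rewrite /fro2; apply: eq_bigr => i _; apply: eq_bigr => j _;
      rewrite [(Xof v - Yof v) i j]mxE [(- Yof v) i j]mxE expr2.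
  apply: cont_sum => i; apply: cont_sum => j.
  by apply: cont_mul; apply: cont_sub; [exact: contX|exact: contY|exact: contX|exact: contY].
rewrite /G; apply: cont_add; first apply: cont_add.
- by apply: cont_mul; [exact: cont_cst | exact: hln].
- exact: htr.
- by apply: cont_mul; [exact: cont_cst | exact: hfro].
Qed.

Definition v0 : V := toV (eps%:M) 0.
Definition K := [set v : V | setM eps (Xof v) /\ setN s Nb (Yof v) /\ G v <= G v0].

Lemma symmxP n (A : 'M[R]_n) : symmx A <-> forall i j, A j i = A i j.
Proof.
split => [h i j | h]; first by rewrite -{2}h mxE.
by apply/matrixP => i j; rewrite mxE; exact: h.
Qed.

Lemma closedM : closed [set v : V | setM eps (Xof v)].
Proof.
have cXm : forall i j, continuous (fun v : V => (Xof v - eps%:M) i j).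
  move=> i j.
  have -> : (fun v : V => (Xof v - eps%:M) i j) = (fun v => Xof v i j - eps%:M i j).
    by apply: funext => v; rewrite [(Xof v - _) i j]mxE [(- (eps%:M : 'M[R]_p)) i j]mxE.
  by apply: cont_sub; [exact: contX | exact: cont_cst].
rewrite (_ : [set v : V | setM eps (Xof v)] = [set v | (forall i j, Xof v j i = Xof v i j) /\
   ((forall i j, (Xof v - eps%:M) j i = (Xof v - eps%:M) i j) /\
    forall w : 'cV[R]_p, 0 <= bil (Xof v - eps%:M) w^T w^T)]).
  apply: closed_and.
    apply: closed_all => i; apply: closed_all => j.
    by apply: closed_eqf; exact: contX.
  apply: closed_and.
    apply: closed_all => i; apply: closed_all => j.
    by apply: closed_eqf; exact: cXm.
  apply: closed_all => w; apply: closed_gef.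
  by apply: cont_bil => i j; exact: cXm.
apply/seteqP; split => v /=; rewrite /setM /psdmx.
  case=> /symmxP h1 [/symmxP h2 h3]; split => //; split => // w.
  by rewrite /bil trmxK; exact: h3.
case=> h1 [h2 h3]; split; first exact/symmxP.
split; first exact/symmxP.
by move=> w; have := h3 w; rewrite /bil trmxK.
Qed.

Lemma closedN : closed [set v : V | setN s Nb (Yof v)].
Proof.
apply: closed_and3.
- apply: closed_all => i; apply: closed_all => j; apply: closed_imp.
  by apply: closed_eqf; exact: contY.
- apply: closed_all => i; apply: closed_all => j; apply: closed_all => k.
  apply: closed_all => l; do 4 apply: closed_imp.
  by apply: closed_eqf; exact: contY.
- apply: closed_all => i; apply: closed_all => j; do 2 apply: closed_imp.
  by apply: closed_eqf; [exact: contY | exact: cont_cst].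
Qed.

Lemma closedK : closed K.
Proof.
apply: closed_and; first exact: closedM.
apply: closed_and; first exact: closedN.
by apply: closed_lef; exact: contG.
Qed.

Lemma v0K : K v0.
Proof.
rewrite /K /= /v0 XofV YofV; split.
  split; first by rewrite /symmx tr_scalar_mx.
  rewrite subrr; split; first by rewrite /symmx trmx0.
  by move=> w; rewrite mulmx0 mul0mx mxE.
split; last by [].
by split => *; rewrite !mxE.
Qed.

Lemma K_bound : exists2 b, 0 <= b & forall v, K v -> forall k, `|v 0 k| <= b.
Proof.
have [c0 c00 hC] := C_lb hB hS.
set K1 := p%:R * ((nu - p%:R) * ln (2 * (nu - p%:R) / c0)).
set P0 := G v0.
set T0 := (P0 + K1) / (c0 / 2).
set F0 := (P0 + K1) / (gamma / 2).
exists (`|T0| + (`|F0| + 1)); first by rewrite addr_ge0 // addr_ge0.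
move=> v [hX [hY hG]] k; rewrite -/P0 in hG.
have hlb := P_lb gamma hnu heps c00 hC (Yof v) hX.
rewrite -/K1 -G_P // in hlb.
have t0 := tr_M_ge0 heps hX.
have f0 := fro2_ge0 (Xof v - Yof v).
have c2 : 0 < c0 / 2 by rewrite divr_gt0.
have g2 : 0 < gamma / 2 by rewrite divr_gt0.
have ht : \tr (Xof v) <= T0.
  rewrite /T0 ler_pdivlMr //.
  have : 0 <= gamma / 2 * fro2 (Xof v - Yof v) by rewrite mulr_ge0 // ltW.
  lra.
have hf : fro2 (Xof v - Yof v) <= F0.
  rewrite /F0 ler_pdivlMr //.
  have : 0 <= c0 / 2 * \tr (Xof v) by rewrite mulr_ge0 // ltW.
  lra.
have hXij : forall i j, `|Xof v i j| <= `|T0|.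
  move=> i j; apply: le_trans (entry_M heps hX i j) _.
  exact: le_trans ht (ler_norm T0).
have hDij : forall i j, `|Xof v i j - Yof v i j| <= `|F0| + 1.
  move=> i j.
  have sq : (Xof v i j - Yof v i j) ^+ 2 <= F0.
    apply: le_trans hf; rewrite /fro2 (bigD1 i) //= (bigD1 j) //= !mxE.
    rewrite -addrA lerDl addr_ge0 //.
      by apply: sumr_ge0 => l _; exact: sqr_ge0.
    by apply: sumr_ge0 => m _; apply: sumr_ge0 => l _; exact: sqr_ge0.
  have hF := ler_norm F0.
  move: sq hF; move: (Xof v i j - Yof v i j) => a sq hF.
  rewrite ler_norml; apply/andP; split; nra.
have hYij : forall i j, `|Yof v i j| <= `|T0| + (`|F0| + 1).
  move=> i j; have -> : Yof v i j = Xof v i j - (Xof v i j - Yof v i j) by ring.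
  apply: le_trans (ler_normB _ _) _; exact: lerD.
rewrite -(splitK k); case: (fintype.split k) => k' /=; case/mxvec_indexP: k' => i j.
  rewrite -Xof_entry; apply: le_trans (hXij i j) _.
  by rewrite lerDl addr_ge0.
by rewrite -Yof_entry.
Qed.

Lemma K_compact : compact K.
Proof.
apply: bounded_closed_compact closedK.
have [b b0 hb] := K_bound.
exists b; split; first exact: num_real.
move=> M bM v Kv; change (mx_norm v <= M); rewrite mx_normrE.
apply: bigmax_le; first exact: le_trans b0 (ltW bM).
move=> [i k] _ /=; rewrite (ord1 i); exact: le_trans (hb v Kv k) (ltW bM).
Qed.

Lemma main_exists : exists XY : 'M[R]_p * 'M[R]_p,
    [/\ setM eps XY.1, setN s Nb XY.2,
        (forall X Y, setM eps X -> setN s Nb Y ->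
           P XY.1 XY.2 <= P X Y)
      & (forall X Y, setM eps X -> setN s Nb Y ->
           (forall X' Y', setM eps X' -> setN s Nb Y' ->
              P X Y <= P X' Y') ->
           (X, Y) = XY)].
Proof.
have K0 : K !=set0 by exists v0; exact: v0K.
have [c Kc cmin] := compact_EVT_min K0 K_compact (continuous_subspaceT contG).
have [hXc [hYc hGc]] := set_mem Kc.
have opt : forall X Y, setM eps X -> setN s Nb Y -> P (Xof c) (Yof c) <= P X Y.
  move=> X Y hX hY.
  have e : P X Y = G (toV X Y) by rewrite G_P ?XofV ?YofV.
  rewrite -G_P // e.
  case: (lerP (G (toV X Y)) (G v0)) => h.
    apply: cmin; apply: mem_set; rewrite /K /= XofV YofV; split => //.
  exact: le_trans hGc (ltW h).
exists (Xof c, Yof c); split => //=.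
move=> X Y hX hY hmin.
have e1 := hmin _ _ hXc hYc.
have e2 := opt _ _ hX hY.
have contra : (X != Xof c) || (Y != Yof c) -> False.
  move=> hne.
  have hm := mid_strict B S hnu heps hgam hX hXc hne.
  have hmm := hmin _ _ (mid_M hX hXc) (mid_N hY hYc).
  lra.
case: (eqVneq X (Xof c)) => [eX|nX]; last by exfalso; apply: contra; rewrite nX.
case: (eqVneq Y (Yof c)) => [eY|nY]; last by exfalso; apply: contra; rewrite nY orbT.
by rewrite eX eY.
Qed.

End Main3.


Theorem theorem2 (R : realType) (p : nat) (T : eqType) (s : 'I_p -> T)
  (Nb : 'I_p -> {set 'I_p}) (nu eps gamma : R) (B S : 'M[R]_p) :
  (1 <= p)%N ->
  (forall i, i \notin Nb i) ->
  p%:R < nu -> 0 < eps -> 0 < gamma ->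
  pdmx B -> psdmx S ->
  exists XY : 'M[R]_p * 'M[R]_p,
    [/\ setM eps XY.1, setN s Nb XY.2,
        (forall X Y, setM eps X -> setN s Nb Y ->
           Pgamma nu gamma B S XY.1 XY.2 <= Pgamma nu gamma B S X Y)
      & (forall X Y, setM eps X -> setN s Nb Y ->
           (forall X' Y', setM eps X' -> setN s Nb Y' ->
              Pgamma nu gamma B S X Y <= Pgamma nu gamma B S X' Y') ->
           (X, Y) = XY)].

Proof.
move=> _ hNb hnu heps hgam hB hS.
exact: (main_exists s Nb hnu heps hgam hB hS).
Qed.
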